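(* Let $s\ge2$ and $1=a_1\le a_2\le\dots\le a_s$ with at least one of $a_2,\dots,a_s$ greater than $1$. Define $c_i=1-a_i^{-1}$ for $2\le i\le s$, $M_j=\tfrac12(c_2^j+\dots+c_s^j)$ for $j\ge1$, $$p_0=\prod_{i=2}^s a_i^{-1/2},\qquad p_j=\frac1j\sum_{i=0}^{j-1}M_{j-i}\,p_i\ \ (j\ge1),$$ and $W_i=\sum_{j=0}^i p_j$. Then all $p_j>0$ and, for every $i\ge1$, $$\frac{(i+1)p_{i+1}}{i\,p_i}\le\frac{W_i}{W_{i-1}}.$$ *)

(* Defs.v *)
From Stdlib Require Import Reals List.
Import ListNotations.
Open Scope R_scope.

(* sum_{i=m}^{n} f i  (empty if n < m) *)
Definition rsum (m n : nat) (f : nat -> R) : R :=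
  fold_right Rplus 0 (map f (seq m (S n - m))).
Definition rprod (m n : nat) (f : nat -> R) : R :=
  fold_right Rmult 1 (map f (seq m (S n - m))).

Section Seqs.
Variables (s : nat) (a : nat -> R).

Definition cc (i : nat) : R := 1 - / a i.
Definition MM (j : nat) : R := / 2 * rsum 2 s (fun i => cc i ^ j).
Definition p0 : R := rprod 2 s (fun i => Rpower (a i) (- (1/2))).

(* pl n = [p_0; ...; p_n] *)
Fixpoint pl (n : nat) : list R :=
  match n with
  | O => [p0]
  | S k => pl k ++
           [ / INR (S k) * rsum 0 k (fun i => MM (S k - i) * nth i (pl k) 0) ]
  end.

Definition pp (j : nat) : R := nth j (pl j) 0.
Definition WW (i : nat) : R := rsum 0 i pp.
End Seqs.

(* Main.v *)
Require Import Defs.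
From Stdlib Require Import Reals List Lra Lia Psatz.
Open Scope R_scope.

Definition Phi (p h : nat -> R) (n : nat) : R :=
  sum_f_R0 (fun k => h (n - k)%nat * p k) n.

Lemma Phi_S (p h : nat -> R) n :
  Phi p h (S n) = Phi p (fun d => h (S d)) n + h O * p (S n).
Proof.
  unfold Phi. rewrite tech5. replace (S n - S n)%nat with O by lia. f_equal.
  apply sum_eq. intros i Hi. rewrite Nat.sub_succ_l by lia. reflexivity.
Qed.

Lemma Phi_bound (p g : nat -> R) c n :
  (forall k, 0 <= p k) -> (forall d, g d <= c) -> Phi p g n <= c * sum_f_R0 p n.
Proof.
  intros Hp Hg. unfold Phi. rewrite scal_sum. apply sum_Rle. intros k _.
  specialize (Hp k). specialize (Hg (n-k)%nat). nra.
Qed.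

Lemma W_pos (p : nat -> R) n : (forall k, 0 < p k) -> 0 < sum_f_R0 p n.
Proof.
  intros Hp. induction n; simpl. apply Hp. specialize (Hp (S n)). lra.
Qed.

Lemma nonincr_le (h : nat -> R) : (forall d, h (S d) <= h d) -> forall d, h d <= h O.
Proof. intros H d; induction d. lra. specialize (H d). lra. Qed.

Lemma key (p : nat -> R) (Hp : forall k, 0 < p k) : forall n,
  (forall m, (m < n)%nat -> sum_f_R0 p m * sum_f_R0 p (S (S m)) <= sum_f_R0 p (S m) * sum_f_R0 p (S m)) ->
  forall h, (forall d, h (S d) <= h d) ->
  Phi p h (S n) * sum_f_R0 p n <= Phi p h n * sum_f_R0 p (S n).
Proof.
  induction n; intros LC h Hh.
  - unfold Phi. simpl. specialize (Hh O). pose proof (Hp O). nra.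
  - rewrite (Phi_S p h (S n)), (Phi_S p h n).
    set (h' := fun d => h (S d)).
    assert (IH : Phi p h' (S n) * sum_f_R0 p n <= Phi p h' n * sum_f_R0 p (S n)).
    { apply IHn. intros m Hm; apply LC; lia. intros d; apply Hh. }
    assert (Lc := LC n (Nat.lt_succ_diag_r n)).
    assert (Ab : Phi p h' (S n) <= h O * sum_f_R0 p (S n)).
    { apply Phi_bound. intros k; left; apply Hp. intros d; unfold h'.
      apply nonincr_le; auto. }
    pose proof (W_pos p n Hp) as W0.
    change (sum_f_R0 p (S (S n))) with (sum_f_R0 p (S n) + p (S (S n))) in *.
    change (sum_f_R0 p (S n)) with (sum_f_R0 p n + p (S n)) in *.
    set (A := Phi p h' (S n)) in *. set (B := Phi p h' n) in *.
    set (Wn := sum_f_R0 p n) in *. set (p1 := p (S n)) in *.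
    set (p2 := p (S (S n))) in *. set (h0 := h O) in *.
    assert (P1 : 0 < p1) by apply Hp. assert (P2 : 0 < p2) by apply Hp.
    apply Rmult_le_reg_l with (Wn + p1). lra.
    assert (E1 : B * (Wn + p1) * (Wn + p1 + p2) >= A * Wn * (Wn + p1 + p2)) by nra.
    set (G := (Wn + p1) * (Wn + p1) - Wn * (Wn + p1 + p2)).
    assert (G0 : 0 <= G) by (unfold G; lra).
    assert (E2 : 0 <= (h0 * (Wn + p1) - A) * G) by (apply Rmult_le_pos; lra).
    unfold G in E2. nra.
Qed.

Lemma fold_plus_shift (l : list R) z : fold_right Rplus z l = fold_right Rplus 0 l + z.
Proof. induction l; simpl; [lra | rewrite IHl; lra]. Qed.

Lemma rsum0 n f : rsum 0 n f = sum_f_R0 f n.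
Proof.
  unfold rsum. replace (S n - 0)%nat with (S n) by lia.
  induction n.
  - simpl. lra.
  - rewrite seq_S, map_app, fold_right_app, fold_plus_shift, IHn. simpl. lra.
Qed.

Lemma fold_le (f g : nat -> R) (l : list nat) :
  (forall i, In i l -> f i <= g i) ->
  fold_right Rplus 0 (map f l) <= fold_right Rplus 0 (map g l).
Proof.
  induction l; simpl; intros H. lra.
  assert (f a <= g a) by auto. assert (fold_right Rplus 0 (map f l) <= fold_right Rplus 0 (map g l)) by auto. lra.
Qed.

Lemma fold_pos (f : nat -> R) (l : list nat) i0 :
  (forall i, In i l -> 0 <= f i) -> In i0 l -> 0 < f i0 ->
  0 < fold_right Rplus 0 (map f l).
Proof.
  induction l; simpl; intros H Hi Hf. contradiction.
  assert (0 <= fold_right Rplus 0 (map f l)).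
  { pose proof (fold_le (fun _ => 0) f l) as F.
    assert (Z : forall l', fold_right Rplus 0 (map (fun _ : nat => 0) l') = 0).
    { induction l'; simpl; [lra|rewrite IHl'; lra]. }
    rewrite Z in F. apply F. auto. }
  destruct Hi as [<-|Hi]. assert (0 <= f a) by auto. lra.
  assert (0 <= f a) by auto. assert (0 < fold_right Rplus 0 (map f l)) by auto. lra.
Qed.

Lemma fold_prod_pos (f : nat -> R) (l : list nat) :
  (forall i, 0 < f i) -> 0 < fold_right Rmult 1 (map f l).
Proof. intros H; induction l; simpl. lra. apply Rmult_lt_0_compat; auto. Qed.

Lemma pl_length s a k : length (pl s a k) = S k.
Proof. induction k; simpl; auto. rewrite length_app, IHk. simpl. lia. Qed.

Lemma pl_nth s a k i : (i <= k)%nat -> nth i (pl s a k) 0 = pp s a i.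
Proof.
  induction k; intros Hi.
  - replace i with O by lia. reflexivity.
  - destruct (Nat.eq_dec i (S k)) as [->|Hne]. reflexivity.
    simpl. rewrite app_nth1 by (rewrite pl_length; lia). apply IHk. lia.
Qed.

Lemma pp_S s a k : pp s a (S k) = / INR (S k) * sum_f_R0 (fun i => MM s a (S k - i) * pp s a i) k.
Proof.
  unfold pp at 1. simpl. rewrite app_nth2 by (rewrite pl_length; lia).
  rewrite pl_length, Nat.sub_diag. simpl nth. rewrite rsum0. f_equal.
  apply sum_eq. intros i Hi. rewrite pl_nth by lia. reflexivity.
Qed.

Lemma pp_Phi s a k : INR (S k) * pp s a (S k) = Phi (pp s a) (fun d => MM s a (S d)) k.
Proof.
  rewrite pp_S. unfold Phi. rewrite <- Rmult_assoc, Rinv_r by (apply not_0_INR; lia).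
  rewrite Rmult_1_l. apply sum_eq. intros i Hi. rewrite Nat.sub_succ_l by lia. reflexivity.
Qed.

Lemma divle a b c d : 0 < b -> 0 < d -> a * d <= c * b -> a / b <= c / d.
Proof.
  intros Hb Hd H. unfold Rdiv.
  apply Rmult_le_reg_r with (b * d). nra.
  replace (a * / b * (b * d)) with (a * d) by (field; lra).
  replace (c * / d * (b * d)) with (c * b) by (field; lra). lra.
Qed.

Lemma sum_pos0 (f : nat -> R) k : 0 < f O -> (forall i, (i <= k)%nat -> 0 <= f i) -> 0 < sum_f_R0 f k.
Proof.
  intros H0 H; induction k; simpl; auto.
  assert (0 <= f (S k)) by auto. assert (0 < sum_f_R0 f k) by auto. lra.
Qed.

Theorem mainTheorem10 (s : nat) (a : nat -> R)
  (hs : (2 <= s)%nat)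
  (ha1 : a 1%nat = 1)
  (hmono : forall i : nat, (1 <= i)%nat -> (i < s)%nat -> a i <= a (S i))
  (hgt : exists i : nat, (2 <= i)%nat /\ (i <= s)%nat /\ 1 < a i) :
  (forall j : nat, 0 < pp s a j) /\
  (forall i : nat, (1 <= i)%nat ->
     (INR (S i) * pp s a (S i)) / (INR i * pp s a i)
       <= WW s a i / WW s a (i - 1)).
Proof.
  assert (Ha : forall i, (1 <= i)%nat -> (i <= s)%nat -> 1 <= a i).
  { induction i; intros H1 H2. lia.
    destruct (Nat.eq_dec i O) as [->|Hn]. rewrite ha1; lra.
    specialize (hmono i ltac:(lia) ltac:(lia)). specialize (IHi ltac:(lia) ltac:(lia)). lra. }
  assert (Hc : forall i, In i (seq 2 (S s - 2)) -> 0 <= cc a i <= 1).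
  { intros i Hi. apply in_seq in Hi. specialize (Ha i ltac:(lia) ltac:(lia)).
    unfold cc. assert (0 < / a i <= 1). { split. apply Rinv_0_lt_compat; lra.
      rewrite <- Rinv_1. apply Rinv_le_contravar; lra. } lra. }
  assert (MMnn : forall j, 0 <= MM s a j).
  { intros j. unfold MM, rsum. apply Rmult_le_pos. lra.
    pose proof (fold_le (fun _ => 0) (fun i => cc a i ^ j) (seq 2 (S s - 2))) as F.
    assert (Z : forall l', fold_right Rplus 0 (map (fun _ : nat => 0) l') = 0).
    { induction l'; simpl; [lra|rewrite IHl'; lra]. }
    rewrite Z in F. apply F. intros i Hi. apply pow_le. apply Hc; auto. }
  assert (MMdec : forall j, MM s a (S j) <= MM s a j).
  { intros j. unfold MM, rsum. apply Rmult_le_compat_l. lra. apply fold_le.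
    intros i Hi. specialize (Hc i Hi). simpl. pose proof (pow_le (cc a i) j ltac:(lra)). nra. }
  assert (MMpos : forall j, 0 < MM s a (S j)).
  { intros j. destruct hgt as [i0 [H1 [H2 H3]]]. unfold MM, rsum. apply Rmult_lt_0_compat. lra.
    apply fold_pos with i0. intros i Hi. apply pow_le. apply Hc; auto.
    apply in_seq. lia. apply pow_lt. unfold cc.
    assert (/ a i0 < 1). { rewrite <- Rinv_1. apply Rinv_lt_contravar; lra. } lra. }
  assert (H0 : 0 < pp s a 0).
  { unfold pp. simpl. unfold p0, rprod. apply fold_prod_pos. intros i. apply exp_pos. }
  assert (Pn : forall n j, (j <= n)%nat -> 0 < pp s a j).
  { induction n; intros j Hj. replace j with O by lia; auto.
    destruct (Nat.eq_dec j (S n)) as [->|Hne]; [|apply IHn; lia].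
    rewrite pp_S. apply Rmult_lt_0_compat. apply Rinv_0_lt_compat, lt_0_INR; lia.
    apply sum_pos0. apply Rmult_lt_0_compat; auto. replace (S n - 0)%nat with (S n) by lia. apply MMpos.
    intros i Hi. apply Rmult_le_pos. apply MMnn. left. apply IHn; lia. }
  assert (Ppos : forall j, 0 < pp s a j) by (intros j; apply (Pn j); lia).
  split; [exact Ppos|].
  set (p := pp s a). set (h := fun d => MM s a (S d)).
  assert (Hp : forall k, 0 < p k) by exact Ppos.
  assert (Hh : forall d, h (S d) <= h d) by (intros; apply MMdec).
  assert (LCof : forall m, Phi p h (S m) * sum_f_R0 p m <= Phi p h m * sum_f_R0 p (S m) ->
     sum_f_R0 p m * sum_f_R0 p (S (S m)) <= sum_f_R0 p (S m) * sum_f_R0 p (S m)).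
  { intros m H. unfold p, h in H. rewrite <- !pp_Phi in H. fold p in H.
    rewrite (S_INR (S m)) in H.
    change (sum_f_R0 p (S (S m))) with (sum_f_R0 p (S m) + p (S (S m))) in *.
    change (sum_f_R0 p (S m)) with (sum_f_R0 p m + p (S m)) in *.
    pose proof (W_pos p m Hp). pose proof (Hp (S m)). pose proof (Hp (S (S m))).
    assert (0 < INR (S m)) by (apply lt_0_INR; lia).
    set (x := INR (S m)) in *. set (Wm := sum_f_R0 p m) in *.
    set (p1 := p (S m)) in *. set (p2 := p (S (S m))) in *.
    assert (Q : x * (Wm * p2) <= x * (p1 * (Wm + p1))) by nra.
    apply Rmult_le_reg_l in Q; [nra|lra]. }
  assert (Cl : forall N n, (n <= N)%nat -> Phi p h (S n) * sum_f_R0 p n <= Phi p h n * sum_f_R0 p (S n)).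
  { induction N; intros n Hn.
    - apply key; auto. intros m Hm; lia.
    - apply key; auto. intros m Hm; apply LCof; apply IHN; lia. }
  intros i Hi. destruct i. lia. unfold WW. rewrite !rsum0.
  replace (S i - 1)%nat with i by lia. fold p.
  apply divle. apply Rmult_lt_0_compat; auto. apply lt_0_INR; lia. apply W_pos; auto.
  unfold p. rewrite !pp_Phi. rewrite (Rmult_comm (sum_f_R0 _ (S i))). apply (Cl i i). lia.
Qed.
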